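(* Let $G$ be a digraph and $r\ge1$. Then the distance-$r$ VC-dimension of $G$ is at most $(r+2)\cdot(2\,\mathrm{wcol}_r(G))^2$.
   Context: For a linear order $L$ of $V(G)$, $u$ is weakly $r$-reachable from $v$ if there is a directed path of length at most $r$ from $u$ to $v$ or from $v$ to $u$ on which $u$ is the $L$-minimum; $\mathrm{WReach}_r[G,L,v]$ is the set of such $u$; $\mathrm{wcol}_r(G)=\min_L\max_{v}|\mathrm{WReach}_r[G,L,v]|$. $N_r^-(v)$ is the set of vertices from which $v$ is reachable by a directed path of length at most $r$. The distance-$r$ VC-dimension of $G$ is the VC-dimension of the set family $\{N_r^-(v) : v\in V(G)\}$ over ground set $V(G)$, i.e. the maximum size of a set $X\subseteq V(G)$ with $\{X\cap N_r^-(v): v\in V(G)\}=2^X$. *)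

(* Defs.v *)
From mathcomp Require Import all_boot.
Set Implicit Arguments. Unset Strict Implicit. Unset Printing Implicit Defensive.

Section Defs.
Variable T : finType.

Definition bpath (e : rel T) (r : nat) (P : pred T) (x y : T) : bool :=
  [exists k : 'I_r.+1, exists p : k.-tuple T,
     [&& path e x p, last x p == y & all P (x :: p)]].

(* Linear orders of V(G): bijective rankings L : V(G) -> {0,..,|V(G)|-1};
   u <_L w iff L u < L w. *)
Definition linorder (L : {ffun T -> 'I_#|T|}) : bool := injectiveb L.

Definition WReach (e : rel T) (r : nat) (L : {ffun T -> 'I_#|T|}) (v : T)
  : {set T} :=
  [set u | bpath e r (fun w => L u <= L w) u v
        || bpath e r (fun w => L u <= L w) v u].

Definition wcol (e : rel T) (r : nat) : nat :=
  \big[minn/#|T|]_(L : {ffun T -> 'I_#|T|} | linorder L)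
     \max_(v : T) #|WReach e r L v|.

Definition inNbh (e : rel T) (r : nat) (v : T) : {set T} :=
  [set u | bpath e r predT u v].

Definition shattered (e : rel T) (r : nat) (X : {set T}) : bool :=
  [forall S : {set T}, (S \subset X) ==>
     [exists v : T, X :&: inNbh e r v == S]].

Definition vcdim (e : rel T) (r : nat) : nat :=
  \max_(X : {set T} | shattered e r X) #|X|.

End Defs.

(* Main.v *)
Require Import Defs.
From mathcomp Require Import all_boot zify.
Set Implicit Arguments. Unset Strict Implicit. Unset Printing Implicit Defensive.

Section Paths.
Variable T : finType.
Variable e : rel T.

Lemma bpathP r (P : pred T) x y : reflect (exists p : seq T,
  [/\ size p <= r, path e x p, last x p = y & all P (x :: p)]) (bpath e r P x y).
Proof.
apply: (iffP existsP) => [[k /existsP [p /and3P [H1 /eqP H2 H3]]] | [p [H0 H1 H2 H3]]].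
  exists p; split => //. by rewrite size_tuple -ltnS ltn_ord.
have H0' : size p < r.+1 by rewrite ltnS.
exists (Ordinal H0'). apply/existsP; exists (in_tuple p). by apply/and3P; split => //; apply/eqP.
Qed.

Lemma bpath_mono i j (P : pred T) x y : i <= j -> bpath e i P x y -> bpath e j P x y.
Proof.
move=> hij /bpathP [p [H0 H1 H2 H3]]; apply/bpathP; exists p; split => //.
exact: leq_trans hij.
Qed.

Lemma bpath_cat i j (P Q : pred T) x y z :
  bpath e i P x y -> bpath e j Q y z -> bpath e (i + j) predT x z.
Proof.
move=> /bpathP [p [H0 H1 H2 H3]] /bpathP [q [G0 G1 G2 G3]].
apply/bpathP; exists (p ++ q); split.
- by rewrite size_cat leq_add.
- by rewrite cat_path H1 H2 G1.
- by rewrite last_cat H2 G2.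
- exact: all_predT.
Qed.

Lemma bpath_split r (L : {ffun T -> 'I_#|T|}) x y : bpath e r predT x y ->
  exists m i j, [/\ i + j <= r, bpath e i (fun w => L m <= L w) x m
                 & bpath e j (fun w => L m <= L w) m y].
Proof.
move=> /bpathP [p [H0 H1 H2 _]].
have hx : x \in x :: p by rewrite inE eqxx.
case: (arg_minnP (fun w => nat_of_ord (L w)) hx) => m hm hmin.
exists m.
have Hall : forall s, {subset s <= x :: p} -> all (fun w => L m <= L w) s.
  by move=> s hs; apply/allP => w /hs /hmin.
have hm' : m \in x :: p := hm.
move: hm'; rewrite inE => /orP [/eqP em | hmp].
  exists 0, (size p); split => //.
    apply/bpathP; exists [::]; split => //=. by rewrite em leqnn.
  apply/bpathP; exists p; have E : m :: p = x :: p by rewrite em.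
  split => //; try by rewrite em. by rewrite E; apply: Hall.
case: (path.splitP hmp) H1 H2 H0 Hall => p1 p2.
rewrite cat_path rcons_path last_cat last_rcons size_cat size_rcons.
move=> /andP [/andP [G1 G2] G3] G4 G5 Hall.
exists (size p1).+1, (size p2); split => //.
- apply/bpathP; exists (rcons p1 m); split => //.
  + by rewrite size_rcons.
  + by rewrite rcons_path G1.
  + by rewrite last_rcons.
  + apply: Hall => w hw; by rewrite -cat_cons mem_cat hw.
- apply/bpathP; exists p2; split => //.
  apply: Hall => w; rewrite !inE mem_cat mem_rcons inE.
  by case/orP => [->| ->]; rewrite ?orbT.
Qed.

Section Count.
Variables (r c : nat) (L : {ffun T -> 'I_#|T|}).
Hypothesis hc : forall v, #|WReach e r L v| <= c.

Definition Cset (m : T) (j : nat) : {set T} :=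
  [set u | bpath e (r - j) (fun w => L m <= L w) u m].

Definition decode (X : {set T}) (f : {ffun 'I_c -> option T * {set 'I_r.+1}}) : {set T} :=
  X :&: \bigcup_(i : 'I_c) (match (f i).1 with
     | Some m => \bigcup_(j in (f i).2) Cset m j | None => set0 end).

Definition Mset (X : {set T}) := \bigcup_(u in X) WReach e r L u.

Definition Rset (X : {set T}) : {set option T * {set 'I_r.+1}} :=
  setX (None |: [set Some m | m in Mset X]) (powerset [set: 'I_r.+1]).

Lemma code_exists X v : exists2 f, f \in ffun_on (mem (Rset X)) &
  decode X f = X :&: inNbh e r v.
Proof.
set s := enum (WReach e r L v :&: Mset X).
have hs : size s <= c by rewrite -cardE (leq_trans (subset_leq_card (subsetIl _ _))).
pose f := [ffun i : 'I_c => (if i < size s then Some (nth v s i) else None,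
   [set j : 'I_r.+1 | bpath e j (fun w => L (nth v s i) <= L w) (nth v s i) v])].
exists f.
  apply/ffun_onP => i; rewrite ffunE in_setX powersetE subsetT andbT in_setU1.
  case: ifP => hi; last by rewrite eqxx.
  rewrite imset_f ?orbT //.
  have : nth v s i \in s by rewrite mem_nth.
  by rewrite mem_enum inE => /andP [].
apply/setP => u; rewrite !inE; case hX : (u \in X) => //=.
apply/bigcupP/idP.
  case=> i _; rewrite ffunE /=; case: ifP => hi //=; last by rewrite inE.
  case/bigcupP => j; rewrite inE => hj; rewrite inE => hu.
  apply/bpathP; have := bpath_cat hu hj; rewrite subnK; last by rewrite -ltnS ltn_ord.
  by move/bpathP.
move/(bpath_split L) => [m [i [j [hij h1 h2]]]].
have hmM : m \in Mset X.
  apply/bigcupP; exists u => //; rewrite inE; apply/orP; right.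
  by apply: bpath_mono h1; lia.
have hmW : m \in WReach e r L v.
  by rewrite inE; apply/orP; left; apply: bpath_mono h2; lia.
have hms : m \in s by rewrite mem_enum inE hmW hmM.
have hidx : index m s < c by apply: leq_trans hs; rewrite index_mem.
exists (Ordinal hidx) => //; rewrite ffunE /= index_mem hms /= nth_index //.
have hj : j < r.+1 by lia.
apply/bigcupP; exists (Ordinal hj); first by rewrite inE.
rewrite inE /=; apply: bpath_mono h1; lia.
Qed.


Lemma card_Mset X : #|Mset X| <= c * #|X|.
Proof.
rewrite mulnC -sum_nat_const /Mset.
apply: (big_ind2 (fun (A : {set T}) n => #|A| <= n)).
- by rewrite cards0.
- move=> A n B m hA hB; apply: leq_trans (leq_card_setU A B) _; exact: leq_add.
- by move=> u _; apply: hc.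
Qed.

Lemma card_Rset X : #|Rset X| <= (1 + c * #|X|) * 2 ^ r.+1.
Proof.
rewrite /Rset cardsX card_powerset cardsT card_ord leq_mul2r; apply/orP; right.
rewrite cardsU1 card_imset; last by move=> a b [].
apply: leq_add; first by case: (_ \notin _).
exact: card_Mset.
Qed.

Lemma count_shattered X : shattered e r X ->
  2 ^ #|X| <= ((1 + c * #|X|) * 2 ^ r.+1) ^ c.
Proof.
move=> hX.
have sub : powerset X \subset [set decode X f | f in ffun_on (mem (Rset X))].
  apply/subsetP => S; rewrite powersetE => hS.
  have := forallP hX S; rewrite hS /= => /existsP [v /eqP hv].
  have [f hf hd] := code_exists X v.
  by apply/imsetP; exists f => //; rewrite hd hv.
rewrite -card_powerset; apply: leq_trans (subset_leq_card sub) _.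
apply: leq_trans (leq_imset_card _ _) _.
rewrite card_ffun_on card_ord.
case: (posnP c) => [->|cpos]; first by rewrite !expn0.
rewrite leq_exp2r //; exact: card_Rset.
Qed.

End Count.

Lemma wcol_attained r : exists L : {ffun T -> 'I_#|T|},
  forall v, #|WReach e r L v| <= wcol e r.
Proof.
rewrite /wcol.
apply: (big_ind (fun x => exists L : {ffun T -> 'I_#|T|}, forall v, #|WReach e r L v| <= x)).
- by exists [ffun x => enum_rank x] => v; exact: max_card.
- move=> x y [L1 h1] [L2 h2]; case: (leqP x y) => hxy.
    by exists L1.
  by exists L2.
- by move=> L _; exists L => v; exact: leq_bigmax_cond.
Qed.

Lemma shattered_sub r (X Y : {set T}) : Y \subset X -> shattered e r X -> shattered e r Y.
Proof.
move=> hYX /forallP hX; apply/forallP => S; apply/implyP => hSY.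
have := hX S; rewrite (subset_trans hSY hYX) /= => /existsP [v /eqP hv].
apply/existsP; exists v; apply/eqP.
by rewrite -(setIidPl hYX) -setIA hv; apply/setIidPr.
Qed.

Lemma take_subset (X : {set T}) n : n <= #|X| -> exists2 Y : {set T}, Y \subset X & #|Y| = n.
Proof.
move=> hn; exists [set x in take n (enum X)].
  by apply/subsetP => x; rewrite inE => /mem_take; rewrite mem_enum.
have hu : uniq (take n (enum X)) by rewrite take_uniq // enum_uniq.
rewrite cardsE; move/card_uniqP: hu ->.
by rewrite size_take -cardE; case: ltngtP hn => // ->.
Qed.

End Paths.

Lemma pow8 n : 0 < n -> 6 * n * n * n < 8 ^ n.
Proof.
elim: n => [//|n IH] _; case: n IH => [//|n] IH.
have := IH isT; rewrite [8 ^ n.+2]expnS.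
have h2 : n.+2 <= 2 * n.+1 by lia.
have h3 : n.+2 * n.+2 * n.+2 <= (2 * n.+1) * (2 * n.+1) * (2 * n.+1).
  by apply: leq_mul; [apply: leq_mul|].
nia.
Qed.

Lemma arith r c : 0 < c ->
  ((1 + c * ((r+2)*(2*c)^2).+1) * 2^r.+1)^c < 2^((r+2)*(2*c)^2).+1.
Proof.
move=> c0; set x := c * (r + 2).
have hx : 0 < x by rewrite /x; nia.
have h1 : 1 + c * ((r+2)*(2*c)^2).+1 < 2 ^ (3 * x).
  rewrite mulnC expnM; apply: leq_trans (pow8 hx); rewrite /x; nia.
apply: (@leq_trans ((2 ^ (3 * x) * 2 ^ r.+1) ^ c)).
  by rewrite ltn_exp2r // ltn_pmul2r ?expn_gt0.
rewrite -expnD -expnM leq_exp2l // /x; nia.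
Qed.

Theorem mainTheorem15 (T : finType) (e : rel T) (r : nat) (hr : 1 <= r) :
  vcdim e r <= (r + 2) * (2 * wcol e r) ^ 2.
Proof.
have [L hL] := wcol_attained e r.
apply/bigmax_leqP => X hX; rewrite leqNgt; apply/negP => hlt.
have [Y hYX hY] := take_subset hlt.
have hYs := shattered_sub hYX hX.
have := @count_shattered T e r (wcol e r) L hL Y hYs; rewrite hY.
case: (posnP (wcol e r)) => c0.
  rewrite c0 expn0 leqNgt => /negP; apply.
  exact: leq_trans (ltn_expl _ (isT : 1 < 2)).
by rewrite leqNgt arith.
Qed.
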